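(* If $v\in\widehat T_n\setminus\{e\}$, then there exist $w',w''\in E_n$ with $w'\succeq\mathrm{par}(v)$, $w''\succeq v$ and $$c\big[\|\mathrm{conf}(w')\|_{L,r}+\|\mathrm{conf}(w'')\|_{L,r}\big]<\|d(\hat p_n(\cdot|w'),\hat p_n(\cdot|w''))\|_{L,k}.$$
   Context: $A$ is a finite alphabet; strings $w=w_{-j}\cdots w_{-1}$ over $A$; $e$ is the empty string; $w\preceq w'$ ($w'\succeq w$) means $w$ is a suffix of $w'$; $\mathrm{par}(w_{-j}\cdots w_{-1})=w_{-j+1}\cdots w_{-1}$. A tree is a set of strings containing $e$ and closed under $\mathrm{par}$; a leaf is an element that is the parent of no element. Data: for $\ell=1,\dots,L$ a sample $X_1^n(\ell)\in A^n$; $N_{j,\ell}(w)$ is the number of occurrences of $w$ as a block of consecutive symbols in $X_1^j(\ell)$; $\hat p_{n,\ell}(a|w)=N_{n,\ell}(wa)/N_{n-1,\ell}(w)$ when $\min_\ell N_{n-1,\ell}(w)>0$. Metrics $d_\ell$ on distributions over $A$, $d(q,q')=(d_\ell(q_\ell,q'_\ell))_\ell$, $\hat p_n(\cdot|w)=(\hat p_{n,\ell}(\cdot|w))_\ell$; confidence radii $\mathrm{conf}(w)\in[0,1]^L$; $\|v\|_{L,q}=(\frac1L\sum_\ell|v_\ell|^q)^{1/q}$; fixed $k,r\ge1$ and $c>1$. $E_n=\{w:\min_\ell N_{n-1,\ell}(w)>0\}$. For nonempty $w\in E_n$, $\mathsf{CanRmv}(w)=1$ iff for all $w',w''\in E_n$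 with $w\preceq w'$ and $\mathrm{par}(w)\preceq w''$: $\|d(\hat p_n(\cdot|w'),\hat p_n(\cdot|w''))\|_{L,k}\le c\|\mathrm{conf}(w')\|_{L,r}+c\|\mathrm{conf}(w'')\|_{L,r}$; otherwise $0$. PruneTree: start with $\widehat T_n=E_n$ and all nodes unexamined; while $\widehat T_n$ has an unexamined leaf $w$ ($w\neq e$), remove $w$ from $\widehat T_n$ if $\mathsf{CanRmv}(w)=1$, and mark $w$ examined; output $\widehat T_n$. *)

(* Defs.v *)
From mathcomp Require Import all_boot all_order all_algebra.
From mathcomp Require Import reals exp.
Set Implicit Arguments. Unset Strict Implicit. Unset Printing Implicit Defensive.
Import Order.TTheory GRing.Theory Num.Theory.
Local Open Scope ring_scope.

Section Defs.
Variables (R : realType) (A : finType).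

(* Strings w = w_{-j} ... w_{-1} are represented as [:: w_{-j}; ...; w_{-1}]. *)
Definition par (w : seq A) : seq A := behead w.
(* w ⪯ w' : w is a suffix of w' *)
Definition suf (w w' : seq A) : bool := suffix w w'.

Definition is_leaf (T : seq A -> Prop) (w : seq A) : Prop :=
  T w /\ forall u, T u -> u <> [::] -> par u <> w.

(* N_{j}(w) for a sample x : number of occurrences of w as a block of
   consecutive symbols in the first j symbols of x (the empty block occurs
   at the j+1 possible positions). *)
Definition Nocc (x : seq A) (j : nat) (w : seq A) : nat :=
  count (fun i => take (size w) (drop i (take j x)) == w)
        (iota 0 (j.+1 - size w)).

Definition phat (x : seq A) (n : nat) (w : seq A) (a : A) : R :=
  (Nocc x n (rcons w a))%:R / (Nocc x n.-1 w)%:R.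

Definition En L (X : 'I_L -> seq A) (n : nat) (w : seq A) : Prop :=
  forall l : 'I_L, (0 < Nocc (X l) n.-1 w)%N.

Definition normLq L (q : R) (v : 'I_L -> R) : R :=
  powR (L%:R^-1 * \sum_(l < L) powR `|v l| q) q^-1.

Definition is_distr (q : A -> R) : Prop :=
  (forall a, 0 <= q a) /\ \sum_a q a = 1.

Definition is_metric_on_distr (dd : (A -> R) -> (A -> R) -> R) : Prop :=
  forall p q s, is_distr p -> is_distr q -> is_distr s ->
    [/\ 0 <= dd p q, dd p q = 0 <-> p = q, dd p q = dd q p
      & dd p s <= dd p q + dd q s].

Definition CanRmv L (X : 'I_L -> seq A) (n : nat)
  (d : 'I_L -> (A -> R) -> (A -> R) -> R) (conf : seq A -> 'I_L -> R)
  (k r c : R) (w : seq A) : Prop :=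
  forall w' w'', En X n w' -> En X n w'' -> suf w w' -> suf (par w) w'' ->
    normLq k (fun l => d l (phat (X l) n w') (phat (X l) n w''))
      <= c * normLq r (conf w') + c * normLq r (conf w'').

Definition unexamined_leaf (T Ex : seq A -> Prop) (w : seq A) : Prop :=
  w <> [::] /\ is_leaf T w /\ ~ Ex w.

(* reachable states (current tree, examined nodes) of PruneTree, for any
   order in which unexamined leaves are picked *)
Inductive prune_run (E : seq A -> Prop) (canrmv : seq A -> Prop) :
  (seq A -> Prop) -> (seq A -> Prop) -> Prop :=
| run_init : prune_run E canrmv E (fun _ => False)
| run_remove T Ex w : prune_run E canrmv T Ex -> unexamined_leaf T Ex w ->
    canrmv w ->
    prune_run E canrmv (fun u => T u /\ u <> w) (fun u => Ex u \/ u = w)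
| run_keep T Ex w : prune_run E canrmv T Ex -> unexamined_leaf T Ex w ->
    ~ canrmv w -> prune_run E canrmv T (fun u => Ex u \/ u = w).

Definition PruneTree_output L (X : 'I_L -> seq A) (n : nat)
  (d : 'I_L -> (A -> R) -> (A -> R) -> R) (conf : seq A -> 'I_L -> R)
  (k r c : R) (T : seq A -> Prop) : Prop :=
  exists Ex, prune_run (En X n) (CanRmv X n d conf k r c) T Ex /\
    forall w, ~ unexamined_leaf T Ex w.

End Defs.
Arguments phat {R A} x n w a.
Arguments is_distr {R A} q.
Arguments En {A L} X n w.

(* Main.v *)
Require Import Defs.
From mathcomp Require Import all_boot all_order all_algebra.
From mathcomp Require Import reals exp.
From mathcomp Require Import zify.
Import Order.TTheory GRing.Theory Num.Theory.
From Stdlib Require Import Classical FunctionalExtensionality.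

Lemma sumNocc (A : finType) (x w : seq A) : (0 < size x)%N ->
  (\sum_(a : A) Nocc x (size x) (rcons w a) = Nocc x (size x).-1 w)%N.
Proof.
move=> hx; rewrite /Nocc prednK //.
under eq_bigr => a _ do rewrite take_size size_rcons subSS.
rewrite -sum1_count.
under eq_bigr => a _ do rewrite -sum1_count big_mkcond /=.
rewrite exchange_big [RHS]big_mkcond /=.
apply: eq_big_seq => i; rewrite mem_iota add0n => hi.
have hs : (size w < size (drop i x))%N by rewrite size_drop; lia.
have -> : take (size w) (drop i (take (size x).-1 x)) = take (size w) (drop i x).
  have -> : (size x).-1 = ((size x).-1 - i + i)%N by lia.
  by rewrite -take_drop take_takel //; lia.
case: (drop i x) hs => [//|a0 s] hs.
under eq_bigr => a _ do rewrite (take_nth a0 hs) eqseq_rcons.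
case: eqP => _ /=.
  rewrite (bigD1 (nth a0 (a0 :: s) (size w))) //= eqxx big1 // => b hb.
  by rewrite eq_sym (negbTE hb).
by rewrite big1.
Qed.

Local Open Scope ring_scope.

Lemma phat_distr (R : realType) (A : finType) (x w : seq A) :
  (0 < size x)%N -> (0 < Nocc x (size x).-1 w)%N ->
  is_distr (phat (R:=R) x (size x) w).
Proof.
move=> hx hN; split.
  by move=> a; rewrite /phat divr_ge0 // ler0n.
rewrite /phat -mulr_suml -natr_sum sumNocc // divff //.
by rewrite pnatr_eq0 -lt0n.
Qed.

Lemma run_inv {A : finType} (E C T Ex : seq A -> Prop) :
  prune_run E C T Ex -> forall u, T u -> E u /\ (Ex u -> ~ C u).
Proof.
elim => [u Eu|T0 Ex0 w _ IH _ Cw u [Tu uw]|T0 Ex0 w _ IH _ nC u Tu].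
- by split.
- have [Eu H] := IH u Tu; split => // -[Exu|e]; [exact: H | by []].
- have [Eu H] := IH u Tu; split => // -[Exu|e]; [exact: H | by subst u].
Qed.

Lemma En_size (A : finType) L (X : 'I_L -> seq A) n w :
  (0 < L)%N -> En X n w -> (size w <= n.-1)%N.
Proof.
move=> hL /(_ (Ordinal hL)); rewrite /Nocc => h.
have := leq_trans h (count_size _ _); rewrite size_iota; lia.
Qed.

Theorem propositionA2 (R : realType) (A : finType) (L n : nat)
  (X : 'I_L -> seq A) (d : 'I_L -> (A -> R) -> (A -> R) -> R)
  (conf : seq A -> 'I_L -> R) (k r c : R) (T : seq A -> Prop) :
  (0 < L)%N ->
  (forall l, size (X l) = n) ->
  (forall l, is_metric_on_distr (d l)) ->
  (forall w l, 0 <= conf w l <= 1) ->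
  1 <= k -> 1 <= r -> 1 < c ->
  PruneTree_output X n d conf k r c T ->
  forall v : seq A, T v -> v <> [::] ->
  exists w' w'', En X n w' /\ En X n w'' /\ suf (par v) w' /\ suf v w'' /\
    c * (normLq r (conf w') + normLq r (conf w''))
      < normLq k (fun l => d l (phat (X l) n w') (phat (X l) n w'')).
Proof.
move=> hL hX hd _ _ _ _ [Ex [hrun hfin]].
have inv := @run_inv A _ _ _ _ hrun.
suff main : forall m v, (n.-1 - size v < m)%N -> T v -> v <> [::] ->
  exists w' w'', En X n w' /\ En X n w'' /\ suf (par v) w' /\ suf v w'' /\
    c * (normLq r (conf w') + normLq r (conf w''))
      < normLq k (fun l => d l (phat (X l) n w') (phat (X l) n w'')).
  by move=> v; apply: (main (n.-1 - size v).+1).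
elim=> [//|m IH] v hm Tv vn.
have [Ev _] := inv v Tv.
have sv := @En_size A L X n _ hL Ev.
case: (classic (exists u, T u /\ u <> [::] /\ par u = v)).
  move=> [[|a u] [Tu [nu pu]]]; first by []. rewrite /par /= in pu; rewrite pu in Tu; clear pu.
  have hsu := @En_size A L X n _ hL (proj1 (inv _ Tu)).
  have [w' [w'' [E1 [E2 [S1 [S2 H]]]]]] := IH (a :: v) ltac:(rewrite /= in hsu *; lia) Tu ltac:(by []).
  exists w', w''; do 3 (split => //).
    apply: (@suffix_trans _ v) => //.
    by case: (v) => //= b v'; apply: suffix_cons.
  split => //; apply: (@suffix_trans _ (a :: v)) => //; exact: suffix_cons.
move=> nochild.
have Exv : Ex v.
  apply: NNPP => nEx; apply: (hfin v); split => //; split => //; split => //.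
  by move=> u Tu un pu; apply: nochild; exists u.
have nC := (proj2 (inv v Tv)) Exv.
have [w1 nC1] := not_all_ex_not _ _ nC.
have [w2 nC2] := not_all_ex_not _ _ nC1.
have [E1 nC3] := imply_to_and _ _ nC2.
have [E2 nC4] := imply_to_and _ _ nC3.
have [S1 nC5] := imply_to_and _ _ nC4.
have [S2 nle] := imply_to_and _ _ nC5.
have n0 : (0 < n)%N by move: vn sv; case: (v) => //= ? ? _; lia.
exists w2, w1; do 4 (split => //).
have -> : (fun l => d l (phat (X l) n w2) (phat (X l) n w1)) =
          (fun l => d l (phat (X l) n w1) (phat (X l) n w2)).
  apply: functional_extensionality => l.
  have hD : forall w, En X n w -> is_distr (phat (R:=R) (X l) n w).
    by move=> w Ew; rewrite -(hX l); apply: phat_distr; rewrite hX //; apply: Ew.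
  by have [_ _ -> _] := hd l _ _ _ (hD _ E2) (hD _ E1) (hD _ E1).
rewrite mulrDr addrC real_ltNge ?num_real //.
by apply/negP.
Qed.
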